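(* Let $n\in\mathbb{N}_0$ and $r\in\mathbb{N}$, let $I$ be an open interval, and let $f_i,g_i:I\to\mathbb{R}$ ($i=1,\ldots,r$) be functions which have a derivative of order $n$ on $I$. Suppose that $\sum_{i=1}^{r}g_i=0$ on $I$. Then, for every $\mathbf{s}=(s_1,\ldots,s_r)\in(\mathbb{Z}_{\ge 0})^r$ with $|\mathbf{s}|\le n$, \[ \sum_{|\mathbf{k}|=n}\binom{n}{\mathbf{k}}\prod_{i=1}^{r}\left(f_i g_i^{k_i}\right)^{(s_i)}= \begin{cases} 0, & |\mathbf{s}|<n,\\[2mm] n!\left(\prod_{i=1}^{r}f_i\right)\prod_{i=1}^{r}\left(g_i'\right)^{s_i}, & |\mathbf{s}|=n. \end{cases} \]
   Context: For $\mathbf{k}=(k_1,\ldots,k_r)\in\mathbb{Z}^r$, $|\mathbf{k}|=k_1+\cdots+k_r$. The sum $\sum_{|\mathbf{k}|=n}$ runs over all $\mathbf{k}\in(\mathbb{Z}_{\ge0})^r$ with $|\mathbf{k}|=n$, and $\binom{n}{\mathbf{k}}=\frac{n!}{k_1!\cdots k_r!\,(n-|\mathbf{k}|)!}$, which for $|\mathbf{k}|=n$ is the multinomial coefficient $\frac{n!}{k_1!\cdots k_r!}$. $h^{(s)}$ denotes the $s$-th derivative of $h$ (with $h^{(0)}=h$), and $g^0=1$. *)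

(* Defs.v *)
From mathcomp Require Import all_boot all_order all_algebra.
From mathcomp Require Import all_classical all_reals all_analysis.
Set Implicit Arguments. Unset Strict Implicit. Unset Printing Implicit Defensive.
Import Order.TTheory GRing.Theory Num.Theory.
Local Open Scope ring_scope.

Definition multinom {R : realType} (r n : nat) (k : 'I_r -> nat) : R :=
  (n`!)%:R / (\prod_(i < r) ((k i)`!)%:R).

(* Main.v *)
Require Import Defs.
From mathcomp Require Import all_boot all_order all_algebra.
From mathcomp Require Import all_classical all_reals all_analysis.
From mathcomp Require Import ring zify.
Import Order.TTheory GRing.Theory Num.Theory numFieldNormedType.Exports.
Local Open Scope ring_scope.

Section Alg.
Variable R : realType.

Lemma coef_ffun (n r : nat) (A : 'I_r -> nat -> R) :
  \sum_(k : {ffun 'I_r -> 'I_n.+1} | (\sum_(i < r) (k i : nat) == n)%N)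
     \prod_(i < r) A i (k i)
  = (\prod_(i < r) \sum_(m < n.+1) A i m *: 'X^m)`_n.
Proof.
rewrite (bigA_distr_bigA (fun i (m : 'I_n.+1) => A i m *: 'X^m)) coef_sum.
rewrite [LHS]big_mkcond /=; apply: eq_bigr => k _.
have -> : \prod_i (A i (k i) *: 'X^(k i)) =
   (\prod_i A i (k i))%:P * 'X^(\sum_i (k i : nat)).
  rewrite -prodrXr rmorph_prod -big_split /=.
  by apply: eq_bigr => i _; rewrite mul_polyC.
rewrite coefCM coefXn eq_sym; case: eqP => _; first by rewrite mulr1.
by rewrite mulr0.
Qed.

Variable n : nat.

Definition eqn (p q : {poly R}) := forall m, (m <= n)%N -> p`_m = q`_m.

Lemma eqn_refl p : eqn p p. Proof. by []. Qed.
Lemma eqn_sym p q : eqn p q -> eqn q p. Proof. by move=> h m hm; rewrite h. Qed.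
Lemma eqn_trans p q w : eqn p q -> eqn q w -> eqn p w.
Proof. by move=> h1 h2 m hm; rewrite h1 ?h2. Qed.

Lemma eqn_mul p p' q q' : eqn p p' -> eqn q q' -> eqn (p * q) (p' * q').
Proof.
move=> hp hq m hm; rewrite !coefM; apply: eq_bigr => j _.
have hj := ltn_ord j.
rewrite hp ?hq //; first exact: leq_trans (leq_subr _ _) hm.
by apply: leq_trans hm; rewrite -ltnS.
Qed.

Lemma eqn_prod r (F G : 'I_r -> {poly R}) :
  (forall i, eqn (F i) (G i)) -> eqn (\prod_i F i) (\prod_i G i).
Proof.
move=> h; apply: (@big_ind2 _ _ eqn).
- exact: eqn_refl.
- by move=> ? ? ? ?; apply: eqn_mul.
- by move=> i _; apply: h.
Qed.

Lemma sum_delta (F : nat -> R) m : (m <= n)%N ->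
  \sum_(i < n.+1) F i * (m == i)%:R = F m.
Proof.
move=> hm; rewrite (bigD1 (Ordinal (hm : (m < n.+1)%N)))//= eqxx mulr1.
rewrite big1 ?addr0 // => i hi.
have : (i : nat) != m by apply: contra hi => /eqP h; apply/eqP/val_inj.
by rewrite eq_sym => /negbTE ->; rewrite mulr0.
Qed.

Lemma coef_sumX (F : nat -> R) m : (m <= n)%N ->
  (\sum_(i < n.+1) F i *: 'X^i)`_m = F m.
Proof.
move=> hm; rewrite coef_sum -[RHS](sum_delta F m hm); apply: eq_bigr => i _.
by rewrite coefZ coefXn.
Qed.

Definition E (t : R) : {poly R} := \sum_(m < n.+1) (t ^+ m / (m`!)%:R) *: 'X^m.

Lemma coefE t m : (m <= n)%N -> (E t)`_m = t ^+ m / (m`!)%:R.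
Proof. exact: (coef_sumX (fun m => t ^+ m / (m`!)%:R)). Qed.

Lemma fact_neq0 m : (m`!)%:R != 0 :> R.
Proof. by rewrite pnatr_eq0 -lt0n fact_gt0. Qed.

Lemma E_mul a b : eqn (E a * E b) (E (a + b)).
Proof.
move=> m hm; rewrite coefM coefE // addrC exprDn mulr_suml.
apply: eq_bigr => i _.
have hi : (i <= m)%N by rewrite -ltnS.
rewrite coefE ?coefE; last exact: leq_trans hm.
  2: exact: leq_trans (leq_subr _ _) hm.
have := bin_fact hi => /(congr1 (fun z => z%:R : R)); rewrite !natrM => <-.
have h1 := fact_neq0 i; have h2 := fact_neq0 (m - i).
have h3 : 'C(m, i)%:R != 0 :> R by rewrite pnatr_eq0 -lt0n bin_gt0.
rewrite -mulr_natr; field.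
by rewrite h1 h2 h3.
Qed.


Lemma E0 : eqn (E 0) 1.
Proof.
move=> m hm; rewrite coefE // coef1 expr0n; case: (m =P 0%N) => [->|_].
  by rewrite fact0 divr1.
by rewrite mul0r.
Qed.

Lemma prodE r (y : 'I_r -> R) : eqn (\prod_i E (y i)) (E (\sum_i y i)).
Proof.
apply: (@big_ind2 _ _ (fun p t => eqn p (E t))).
- exact/eqn_sym/E0.
- move=> x1 x2 y1 y2 h1 h2; apply: eqn_trans (E_mul x2 y2).
  exact: eqn_mul.
- by move=> i _; apply: eqn_refl.
Qed.

Lemma QPE (c : nat -> R) (t : R) :
  eqn (\sum_(m < n.+1) ((\sum_(j < n.+1) c j * (m ^_ j)%:R * t ^+ (m - j))
                          / (m`!)%:R) *: 'X^m)
      ((\sum_(j < n.+1) c j *: 'X^j) * E t).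
Proof.
move=> m hm.
rewrite (coef_sumX (fun m => (\sum_(j < n.+1) c j * (m ^_ j)%:R * t ^+ (m - j))
                          / (m`!)%:R)) // coefM mulr_suml.
rewrite (big_ord_widen _ (fun j => (\sum_(j0 < n.+1) c j0 *: 'X^j0)`_j * (E t)`_(m - j))
   (_ : (m.+1 <= n.+1)%N)) //.
rewrite [RHS]big_mkcond /=; apply: eq_bigr => j _.
case: ifP => hj.
- have hj' : (j <= m)%N by rewrite -ltnS.
  rewrite coef_sumX ?coefE; first last.
  + exact: leq_trans hj' hm.
  + exact: leq_trans (leq_subr _ _) hm.
  have := ffact_fact hj' => /(congr1 (fun z => z%:R : R)); rewrite natrM => <-.
  have h1 := fact_neq0 (m - j).
  have h2 : (m ^_ j)%:R != 0 :> R by rewrite pnatr_eq0 -lt0n ffact_gt0.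
  field; by rewrite h1 h2.
- rewrite ffact_small ?mulr0 ?mul0r //.
  by rewrite ltnNge -ltnS hj.
Qed.

Lemma final_sum r (s : 'I_r -> nat) (c : 'I_r -> nat -> R) :
  (forall i j, (s i < j)%N -> c i j = 0) -> (\sum_i s i <= n)%N ->
  \sum_(k : {ffun 'I_r -> 'I_n.+1} | (\sum_(i < r) (k i : nat) == n)%N)
     \prod_(i < r) c i (k i)
  = if (\sum_i s i < n)%N then 0 else \prod_i c i (s i).
Proof.
move=> hc hsn.
have zero : forall k : {ffun 'I_r -> 'I_n.+1},
    ~~ [forall i, (k i <= s i)%N] -> \prod_(i < r) c i (k i) = 0.
  move=> k; rewrite negb_forall => /existsP [i hi].
  by rewrite (bigD1 i) //= hc ?mul0r // ltnNge.
case: ifP => hs.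
  apply: big1 => k /eqP hk; case: (boolP [forall i, (k i <= s i)%N]); last exact: zero.
  move/forallP => h; have : (\sum_i (k i : nat) <= \sum_i s i)%N by apply: leq_sum.
  by rewrite hk leqNgt hs.
have hsn' : (\sum_i s i = n)%N by apply/eqP; rewrite eqn_leq hsn leqNgt hs.
have sin : forall i, (s i < n.+1)%N.
  move=> i; rewrite ltnS -hsn' (bigD1 i) //=; exact: leq_addr.
pose k0 : {ffun 'I_r -> 'I_n.+1} := [ffun i => inord (s i)].
have k0i : forall i, (k0 i : nat) = s i by move=> i; rewrite ffunE inordK.
rewrite (bigD1 k0) /=; last first.
  apply/eqP; rewrite -[X in _ = X]hsn'.
  by apply: eq_bigr => i _; rewrite k0i.
rewrite [X in _ + X]big1 ?addr0; first by apply: eq_bigr => i _; rewrite k0i.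
move=> k /andP [/eqP hk hne]; case: (boolP [forall i, (k i <= s i)%N]); last exact: zero.
move/forallP => h; exfalso; move/negP: hne; apply.
have eqk : forall i, (k i : nat) = s i.
  move=> i; apply/eqP; rewrite eqn_leq h /= leqNgt; apply/negP => lt.
  have : (\sum_i (k i : nat) < \sum_i s i)%N.
    rewrite (bigD1 i) //= [X in (_ < X)%N](bigD1 i) //=.
    by rewrite -addSn leq_add // leq_sum.
  by rewrite hk hsn' ltnn.
by apply/eqP/ffunP => i; apply/val_inj; rewrite /= eqk ffunE inordK.
Qed.

Lemma algebra r (s : 'I_r -> nat) (c : 'I_r -> nat -> R) (y : 'I_r -> R) :
  (forall i j, (s i < j)%N -> c i j = 0) -> (\sum_i s i <= n)%N ->
  \sum_i y i = 0 ->
  \sum_(k : {ffun 'I_r -> 'I_n.+1} | (\sum_(i < r) (k i : nat) == n)%N)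
     multinom n (fun i => (k i : nat)) *
     \prod_(i < r) (\sum_(j < n.+1) c i j * ((k i) ^_ j)%:R * y i ^+ (k i - j))
  = if (\sum_i s i < n)%N then 0 else (n`!)%:R * \prod_i c i (s i).
Proof.
move=> hc hs hy.
pose u i m := \sum_(j < n.+1) c i j * (m ^_ j)%:R * y i ^+ (m - j).
transitivity ((n`!)%:R *
  \sum_(k : {ffun 'I_r -> 'I_n.+1} | (\sum_(i < r) (k i : nat) == n)%N)
     \prod_(i < r) (u i (k i) / ((k i)`!)%:R)).
  rewrite mulr_sumr; apply: eq_bigr => k _.
  by rewrite /multinom prodf_div -mulrA [_^-1 * _]mulrC.
rewrite (@coef_ffun n r (fun i m => u i m / (m`!)%:R)).
have HQ : eqn (\prod_(i < r) \sum_(m < n.+1) (u i m / (m`!)%:R) *: 'X^m)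
              (\prod_(i < r) \sum_(j < n.+1) c i j *: 'X^j).
  apply: eqn_trans; first exact: (@eqn_prod r _ _ (fun i : 'I_r => QPE (c i) (y i))).
  rewrite big_split /=.
  rewrite -[X in eqn _ X]mulr1; apply: eqn_mul; first exact: eqn_refl.
  by apply: eqn_trans (@prodE r y) _; rewrite hy; apply: E0.
rewrite HQ // -coef_ffun (@final_sum r s c hc) //.
by case: ifP; rewrite ?mulr0.
Qed.

End Alg.
Section Ana.
Variable R : realType.
Variables a b : \bar R.

Definition inI (y : R) := (a < y%:E < b)%E.

Lemma inI_near y : inI y -> \forall z \near y, inI z.
Proof.
move=> /andP [ay yb].
have ha : \forall z \near y, (a < z%:E)%E.
  case: a ay => [a'| |] ay //.
  - rewrite lte_fin in ay; apply: filterS (lt_nbhsr ay) => z az.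
    by rewrite lte_fin.
  - by apply: filterE => z; rewrite ltNyr.
have hb : \forall z \near y, (z%:E < b)%E.
  case: b yb => [b'| |] yb //.
  - rewrite lte_fin in yb; apply: filterS (lt_nbhsl yb) => z zb.
    by rewrite lte_fin.
  - by apply: filterE => z; rewrite ltry.
by near=> z; apply/andP; split; near: z.
Unshelve. all: by end_near.
Qed.

Definition Dq q (h : R -> R) :=
  forall m y, (m < q)%N -> inI y -> derivable ((derive1n m h)) y 1.

Lemma loc1 (h1 h2 : R -> R) : (forall y, inI y -> h1 y = h2 y) ->
  forall y, inI y -> (derive1 h1) y = (derive1 h2) y.
Proof.
move=> e y yI; rewrite !derive1E; apply: near_eq_derive.
near=> z; apply: e; near: z; exact: inI_near.
Unshelve. all: by end_near.
Qed.

Lemma locN (h1 h2 : R -> R) : (forall y, inI y -> h1 y = h2 y) ->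
  forall m y, inI y -> (derive1n m h1) y = (derive1n m h2) y.
Proof.
move=> e; elim=> [|m IH] y yI; first exact: e.
by rewrite !derive1nS; apply: loc1.
Qed.

Lemma D_eq q (h1 h2 : R -> R) : (forall y, inI y -> h1 y = h2 y) ->
  Dq q h1 -> Dq q h2.
Proof.
move=> e d m y hm yI; apply: near_eq_derivable (d m y hm yI).
near=> z; apply: locN => //; near: z; exact: inI_near.
Unshelve. all: by end_near.
Qed.

Lemma DS q h : Dq q.+1 h <->
  (forall y, inI y -> derivable h y 1) /\ Dq q ((derive1 h)).
Proof.
split.
- move=> d; split; first by move=> y yI; exact: (d 0%N).
  by move=> m y hm yI; rewrite -derive1Sn; apply: d.
- move=> [d0 d] [|m] y hm yI; first exact: d0.
  by rewrite derive1Sn; apply: d.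
Qed.

Lemma Dle p q h : (p <= q)%N -> Dq q h -> Dq p h.
Proof. by move=> pq d m y hm yI; apply: d => //; exact: leq_trans pq. Qed.

Lemma d0 (c : R) y : (derive1 (fun _ : R => c)) y = 0.
Proof. exact: derive1_cst. Qed.

Lemma D_cst q (c : R) : Dq q (fun _ => c).
Proof.
elim: q c => [|q IH] c; first by [].
apply/DS; split; first by move=> y _; exact: derivable_cst.
have -> : (derive1 (fun _ : R => c)) = fun _ => 0 by apply/funext => y; exact: d0.
exact: IH.
Qed.

Lemma D_add q h k : Dq q h -> Dq q k -> Dq q (fun y => h y + k y).
Proof.
elim: q h k => [|q IH] h k dh dk; first by [].
move/DS: dh => [dh0 dh]; move/DS: dk => [dk0 dk].
apply/DS; split; first by move=> y yI; exact: derivableD (dh0 y yI) (dk0 y yI).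
apply: (@D_eq _ (fun y => (derive1 h) y + (derive1 k) y)); last exact: IH.
move=> y yI; rewrite !derive1E.
exact/esym/(deriveD (dh0 y yI) (dk0 y yI)).
Qed.

Lemma D_mul q h k : Dq q h -> Dq q k -> Dq q (fun y => h y * k y).
Proof.
elim: q h k => [|q IH] h k dh dk; first by [].
have dh' := @Dle q q.+1 _ (leqnSn q) dh; have dk' := @Dle q q.+1 _ (leqnSn q) dk.
move/DS: dh => [dh0 dh]; move/DS: dk => [dk0 dk].
apply/DS; split; first by move=> y yI; exact: derivableM (dh0 y yI) (dk0 y yI).
apply: (@D_eq _ (fun y => h y * (derive1 k) y + k y * (derive1 h) y)); last first.
  by apply: D_add; apply: IH.
move=> y yI; rewrite !derive1E.
exact/esym/(deriveM (dh0 y yI) (dk0 y yI)).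
Qed.

Lemma D_exp q h m : Dq q h -> Dq q (fun y => h y ^+ m).
Proof.
move=> dh; elim: m => [|m IH]; first exact: (D_cst q 1).
by apply: (@D_eq _ (fun y => h y * h y ^+ m)) => [y _|]; [rewrite exprS|apply: D_mul].
Qed.

Fixpoint C (f g : R -> R) (s : nat) : nat -> R -> R :=
  match s with
  | 0 => fun j y => if j == 0%N then f y else 0
  | s'.+1 => fun j y => derive1 (C f g s' j) y +
      (if j is j'.+1 then C f g s' j' y * derive1 g y else 0)
  end.

Lemma C_big f g s j : (s < j)%N -> C f g s j = fun _ => 0.
Proof.
elim: s j => [|s IH] [|j] //= hj; apply/funext => y.
rewrite ltnS in hj; rewrite (IH j.+1); last exact: ltnW. by rewrite (IH j hj) d0 mul0r addr0.
Qed.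

Lemma C_diag f g s y : C f g s s y = f y * derive1 g y ^+ s.
Proof.
elim: s y => [|s IH] y /=; first by rewrite mulr1.
by rewrite C_big // d0 add0r IH exprSr mulrA.
Qed.

Lemma C_smooth n f g : Dq n f -> Dq n g ->
  forall s j, (s <= n)%N -> Dq (n - s) (C f g s j).
Proof.
move=> df dg; elim=> [|s IH] j hs.
  by case: j => [|j] /=; rewrite ?subn0 //; exact: D_cst.
have e : (n - s = (n - s.+1).+1)%N by lia.
have := IH j (ltnW hs); rewrite e => /DS [_ dC].
apply: D_add; first exact: dC.
clear dC; case: j => [|j]; first exact: D_cst.
apply: D_mul; first by apply: Dle (IH j (ltnW hs)); lia.
have e2 : n = n.-1.+1 by lia.
move: dg; rewrite e2 => /DS [_ dg'].
by apply: Dle dg'; lia.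
Qed.

Lemma is_derive_term (h p : R -> R) (c : R) m y :
  derivable h y 1 -> derivable p y 1 ->
  is_derive y (1 : R) (fun z => h z * c * p z ^+ m)
    (derive1 h y * c * p y ^+ m + h y * c * (m%:R * p y ^+ m.-1 * derive1 p y)).
Proof.
move=> dh dp.
have H := is_deriveM (is_deriveM (derivableP dh) (is_derive_cst c y 1))
                      (is_deriveX m (derivableP dp)).
have -> : (fun z => h z * c * p z ^+ m) = (h * cst c) * p ^+ m.
  by apply/funext => z; rewrite exprfctE.
apply: is_derive_eq; rewrite !derive1E /=.
rewrite exprfctE /= scaler0 add0r; rewrite /GRing.scale /=.
have -> : (h * cst c) y = h y * c by [].
ring.
Qed.

Lemma C_formula n f g : Dq n f -> Dq n g -> forall s, (s <= n)%N ->
  forall k y, inI y ->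
  derive1n s (fun z => f z * g z ^+ k) y =
  \sum_(j < s.+1) C f g s j y * (k ^_ j)%:R * g y ^+ (k - j).
Proof.
move=> df dg; elim=> [|s IH] hs k y yI.
  by rewrite big_ord1 /= ffactn0 subn0 mulr1.
rewrite derive1nS (@loc1 _
   (fun z => \sum_(j < s.+1) C f g s j z * (k ^_ j)%:R * g z ^+ (k - j))
   (fun z zI => IH (ltnW hs) k z zI) y yI).
have dC : forall j, derivable (C f g s j) y 1.
  move=> j; apply: (@C_smooth n f g df dg s j (ltnW hs) 0%N y) => //; lia.
have dgy : derivable g y 1 by apply: (dg 0%N y) => //; lia.
have HD : is_derive y (1 : R)
   (fun z => \sum_(j < s.+1) C f g s j z * (k ^_ j)%:R * g z ^+ (k - j))
   (\sum_(j < s.+1) (derive1 (C f g s j) y * (k ^_ j)%:R * g y ^+ (k - j) +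
       C f g s j y * (k ^_ j)%:R * ((k - j)%:R * g y ^+ (k - j).-1 * derive1 g y))).
  have -> : (fun z => \sum_(j < s.+1) C f g s j z * (k ^_ j)%:R * g z ^+ (k - j))
     = \sum_(j < s.+1) (fun z => C f g s j z * (k ^_ j)%:R * g z ^+ (k - j)).
    by rewrite fct_sumE.
  by apply: is_derive_sum => j; apply: is_derive_term.
rewrite derive1E; case: HD => _ ->.
rewrite big_split /=.
under [RHS]eq_bigr do rewrite mulrDl mulrDl.
rewrite big_split /=; congr (_ + _).
  by rewrite [RHS]big_ord_recr /= C_big // d0 !mul0r addr0.
rewrite [RHS]big_ord_recl /= !mul0r add0r; apply: eq_bigr => j _.
rewrite add0n /bump leq0n add1n ffactnSr subnS natrM; ring.
Qed.

End Ana.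

Theorem theorem1 (R : realType) (n r : nat) (a b : \bar R)
  (f g : 'I_r -> R -> R) (s : 'I_r -> nat) :
  (0 < r)%N ->
  (a < b)%E ->
  (* f_i, g_i have a derivative of order n on the open interval I = (a,b) *)
  (forall (i : 'I_r) (m : nat) (x : R), (m < n)%N -> (a < x%:E < b)%E ->
     derivable (derive1n m (f i)) x 1 /\ derivable (derive1n m (g i)) x 1) ->
  (forall x : R, (a < x%:E < b)%E -> \sum_(i < r) g i x = 0) ->
  (\sum_(i < r) s i <= n)%N ->
  forall x : R, (a < x%:E < b)%E ->
    \sum_(k : {ffun 'I_r -> 'I_n.+1} | (\sum_(i < r) (k i : nat) == n)%N)
        multinom n (fun i => (k i : nat)) *
        \prod_(i < r) derive1n (s i) (fun y => f i y * g i y ^+ (k i : nat)) x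
    = if (\sum_(i < r) s i < n)%N then 0
      else (n`!)%:R * (\prod_(i < r) f i x) *
           \prod_(i < r) (derive1 (g i) x) ^+ (s i).
Proof.
move=> hr hab hder hsum hsn x xI.
have Df : forall i, @Dq R a b n (f i).
  by move=> i m y hm yI; case: (hder i m y hm yI).
have Dg : forall i, @Dq R a b n (g i).
  by move=> i m y hm yI; case: (hder i m y hm yI).
have sle : forall i, (s i <= n)%N.
  by move=> i; apply: leq_trans hsn; rewrite (bigD1 i) //=; apply: leq_addr.
pose c i j := @C R (f i) (g i) (s i) j x.
have key : forall k : {ffun 'I_r -> 'I_n.+1},
  \prod_(i < r) derive1n (s i) (fun y => f i y * g i y ^+ (k i : nat)) x =
  \prod_(i < r) \sum_(j < n.+1) c i j * (((k i : nat) ^_ j)%:R) * g i x ^+ (k i - j).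
  move=> k; apply: eq_bigr => i _.
  rewrite (@C_formula R a b n (f i) (g i) (Df i) (Dg i) (s i) (sle i)) //.
  rewrite (big_ord_widen _ (fun j => c i j * (((k i : nat) ^_ j)%:R) * g i x ^+ (k i - j))
             (_ : ((s i).+1 <= n.+1)%N)) ?ltnS ?sle //.
  rewrite big_mkcond /=; apply: eq_bigr => j _.
  case: ifP => // hj; rewrite /c C_big ?mul0r //.
  by rewrite ltnNge -ltnS hj.
under eq_bigr do rewrite key.
rewrite (@algebra R n r s c (fun i => g i x)).
- case: ifP => // _; rewrite -mulrA; congr (_ * _).
  rewrite -big_split; apply: eq_bigr => i _; by rewrite /c C_diag.
- by move=> i j hj; rewrite /c C_big.
- exact: hsn.
- exact: hsum.
Qed.
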